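(* Let $N\ge 2$, $1\le m\le N$ and $1\le k\le N$ be integers. Consider a uniformly random ranking of $N$ items exactly $m$ of which are relevant, i.e. the set of positions occupied by the relevant items is a uniformly random $m$-element subset of $\{1,\dots,N\}$. For $j=1,\dots,N$ let $I_j\in\{0,1\}$ equal $1$ iff the item at position $j$ is relevant, let $P@i=\frac1i\sum_{j=1}^i I_j$, and let $$AP@k=\frac{1}{\min(m,k)}\sum_{i=1}^k P@i\cdot I_i .$$ Then $$\operatorname{E}(AP@k)=\frac{m}{N\cdot\min(k,m)}\left(\frac{m-1}{N-1}\,k+\frac{N-m}{N-1}\,H_k\right),$$ where $H_k=\sum_{i=1}^k\frac1i$.
   Context: This expectation is called $MAP_{WOR}@k$ in the paper (offline evaluation, sampling without replacement). $H_k$ is the $k$-th harmonic number. *)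

(* Defs.v *)
From mathcomp Require Import all_boot all_order all_algebra.
Unset Printing Implicit Defensive.
Import Order.TTheory GRing.Theory Num.Theory.
Local Open Scope ring_scope.

(* Positions 1..N are represented by ordinals 'I_N (position j <-> ordinal j-1).
   A ranking's relevance pattern is the set S of positions of relevant items. *)

Definition relI (R : nzRingType) (N : nat) (S : {set 'I_N}) (j : nat) : R :=
  ((0 < j)%N && [exists x in S, val x == j.-1])%:R.

Definition precAt (R : fieldType) (N : nat) (S : {set 'I_N}) (i : nat) : R :=
  i%:R^-1 * \sum_(1 <= j < i.+1) relI R N S j.

Definition APat (R : fieldType) (N m k : nat) (S : {set 'I_N}) : R :=
  (minn m k)%:R^-1 * \sum_(1 <= i < k.+1) precAt R N S i * relI R N S i.

Definition E_unif (R : fieldType) (N m : nat) (X : {set 'I_N} -> R) : R :=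
  #|[set S : {set 'I_N} | #|S| == m]|%:R^-1 *
  \sum_(S : {set 'I_N} | #|S| == m) X S.

Definition harmonic (R : fieldType) (k : nat) : R := \sum_(1 <= i < k.+1) i%:R^-1.

(* Main.v *)
Require Import Defs.
From mathcomp Require Import all_boot all_order all_algebra zify ring lra.
Import Order.TTheory GRing.Theory Num.Theory.
Local Open Scope ring_scope.

Lemma relI_inord (R : nzRingType) n (S : {set 'I_n.+1}) j : (0 < j <= n.+1)%N ->
  relI R n.+1 S j = ((inord j.-1 : 'I_n.+1) \in S)%:R.
Proof.
move=> /andP[j0 jn]; rewrite /relI j0 /=; congr (_%:R); congr (nat_of_bool _).
have jn' : (j.-1 <= n)%N by lia.
apply/idP/idP => [/existsP[x /andP[xS /eqP xj]]|H].
  suff ->: (inord j.-1 : 'I_n.+1) = x by [].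
  by apply/val_inj; rewrite /= inordK // -xj ltn_ord.
apply/existsP; exists (inord j.-1). rewrite H /= inordK //.
Qed.

Lemma count_sup n (A : {set 'I_n}) m : (#|A| <= m)%N ->
  #|[set S : {set 'I_n} | (#|S| == m) && (A \subset S)]| = 'C(n - #|A|, m - #|A|).
Proof.
move=> Am.
have ->: (n - #|A| = #|~: A|)%N by have e := cardsC A; rewrite card_ord in e; lia.
rewrite -cards_draws.
have inj: {in [set S : {set 'I_n} | (#|S| == m) && (A \subset S)] &, injective (fun S => S :\: A)}.
  move=> S1 S2; rewrite !inE => /andP[_ h1] /andP[_ h2] e.
  by rewrite -(setID S1 A) -(setID S2 A) (setIidPr h1) (setIidPr h2) e.
rewrite -(card_in_imset inj); apply: eq_card => T; rewrite [RHS]inE.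
apply/imsetP/andP => [[S]|[TA /eqP Tc]].
  rewrite inE => /andP[/eqP Sc AS] ->; split; first exact: subsetDr.
  by rewrite cardsDS // Sc.
exists (A :|: T).
  rewrite inE subsetUl andbT cardsU.
  have ->: A :&: T = set0.
    apply/setP=> x; rewrite !inE; apply/negbTE; apply/negP => /andP[xA xT].
    by move: (subsetP TA x xT); rewrite inE xA.
  by rewrite cards0 subn0 Tc subnKC.
rewrite setDUl setDv set0U; apply/setP => x; rewrite !inE.
case xT: (x \in T); rewrite ?andbF //.
by move: (subsetP TA x xT); rewrite inE => ->.
Qed.

Lemma pair_sum (R : nzRingType) n m (j i : nat) : (0 < j <= i)%N -> (i <= n.+1)%N -> (1 <= m)%N ->
  \sum_(S : {set 'I_n.+1} | #|S| == m) relI R n.+1 S j * relI R n.+1 S i =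
  (if j == i then 'C(n, m.-1) else if (2 <= m)%N then 'C(n.-1, m.-2) else 0)%:R.
Proof.
move=> /andP[j0 ji] iN m1.
set a : 'I_n.+1 := inord j.-1; set b : 'I_n.+1 := inord i.-1.
rewrite (eq_bigr (fun S : {set 'I_n.+1} => (((a \in S) && (b \in S) : nat)%:R : R))); last first.
  move=> S _; rewrite !relI_inord -?natrM ?mulnb //; lia.
rewrite -natr_sum; congr (_%:R).
rewrite (eq_bigr (fun S : {set 'I_n.+1} => if (a \in S) && (b \in S) then 1%N else 0%N)); last first.
  by move=> S _; case: (_ && _).
rewrite -big_mkcondr sum1dep_card.
have ->: #|[set S : {set 'I_n.+1} | (#|S| == m) && ((a \in S) && (b \in S))]| =
          #|[set S : {set 'I_n.+1} | (#|S| == m) && ([set a; b] \subset S)]|.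
  by apply: eq_card => S; rewrite !inE subUset !sub1set.
have ab : (a == b) = (j == i).
  apply/eqP/eqP => [e|e]; last by rewrite /a /b e.
  have : val a = val b by rewrite e.
  rewrite /= !inordK; lia.
move: ab; case: (j == i) => ab.
  have -> : [set a; b] = [set a] by rewrite -(eqP ab) setUid.
  by rewrite count_sup cards1 // !subn1.
case: leqP => m2.
  apply: eq_card0 => S; rewrite inE; apply/negP => /andP[/eqP Sm sub].
  have := subset_leq_card sub; rewrite cards2 ab Sm; lia.
rewrite count_sup cards2 ab //=; congr 'C(_, _); lia.
Qed.

Lemma E1 n m : (0 < m)%N -> ('C(n, m.-1) * n.+1 = 'C(n.+1, m) * m)%N.
Proof.
case: m => // m' _.
by rewrite mulnC mul_bin_diag mulnC.
Qed.

Lemma E2 n m : (0 < m)%N -> ((if (1 < m)%N then 'C(n.-1, m.-2) else 0%N) * (n.+1 * n) = 'C(n.+1, m) * (m * m.-1))%N.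
Proof.
case: m => // [[|m']] _ //=.
  by rewrite !muln0.
have h1 := mul_bin_diag n.+1 m'.+1.
have h2 := mul_bin_diag n m'.
rewrite [(n.+1 * n)%N]mulnC mulnA [('C(n.-1, m') * n)%N]mulnC h2.
rewrite -mulnA [('C(n, m'.+1) * n.+1)%N]mulnC h1.
nia.
Qed.

Theorem theorem1 (R : realFieldType) (N m k : nat) :
  (2 <= N)%N -> (1 <= m <= N)%N -> (1 <= k <= N)%N ->
  E_unif R N m (fun S => APat R N m k S) =
  m%:R / (N%:R * (minn k m)%:R) *
    ((m%:R - 1) / (N%:R - 1) * k%:R + (N%:R - m%:R) / (N%:R - 1) * harmonic R k).
Proof.
move=> hN /andP[m1 mN] /andP[k1 kN].
case: N hN mN kN => [//|n] hN mN kN.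
set c1 := 'C(n, m.-1).
set c2 := if (2 <= m)%N then 'C(n.-1, m.-2) else 0%N.
set C := #|[set S : {set 'I_n.+1} | #|S| == m]|.
have key : \sum_(S : {set 'I_n.+1} | #|S| == m) APat R n.+1 m k S =
   (minn m k)%:R^-1 * (c1%:R * harmonic R k + c2%:R * (k%:R - harmonic R k)).
  rewrite /APat -mulr_sumr; congr (_ * _).
  rewrite exchange_big /=.
  rewrite (eq_big_nat _ _ (F2 := fun i => i%:R^-1 * (c2%:R *+ (i - 1) + c1%:R))); last first.
    move=> i /andP[i1 ik].
    rewrite (eq_bigr (fun S => i%:R^-1 * \sum_(1 <= j < i.+1) relI R n.+1 S j * relI R n.+1 S i)); last first.
      by move=> S _; rewrite /precAt -mulrA mulr_suml.
    rewrite -mulr_sumr exchange_big /=; congr (_ * _).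
    rewrite big_nat_recr //= pair_sum ?eqxx ?i1 ?leqnn //; last lia.
    congr (_ + _).
    rewrite (eq_big_nat _ _ (F2 := fun _ => c2%:R)); first by rewrite sumr_const_nat.
    move=> j /andP[j1 ji]; rewrite pair_sum ?j1 ?(ltnW ji) //=; last lia.
    by rewrite ltn_eqF.
  rewrite (eq_big_nat _ _ (F2 := fun i => c1%:R * i%:R^-1 + c2%:R * (1 - i%:R^-1))); last first.
    move=> i /andP[i1 ik].
    have i0 : i%:R != 0 :> R by rewrite pnatr_eq0 -lt0n.
    rewrite -[c2%:R *+ _]mulr_natr natrB //; field; exact: i0.
  rewrite big_split /= -!mulr_sumr sumrB sumr_const_nat subn1 /=.
  by rewrite /harmonic.
rewrite /E_unif key -/C.
have CE : C = 'C(n.+1, m) by rewrite /C card_draws card_ord.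
have e1 : (c1 * n.+1 = C * m)%N by rewrite CE /c1 E1.
have e2 : (c2 * (n.+1 * n) = C * (m * m.-1))%N by rewrite CE /c2 E2.
have C0 : C%:R != 0 :> R by rewrite pnatr_eq0 CE -lt0n bin_gt0.
have n0 : n%:R != 0 :> R by rewrite pnatr_eq0 -lt0n; lia.
have mk0 : (minn m k)%:R != 0 :> R by rewrite pnatr_eq0 -lt0n; lia.
have r1 : c1%:R = C%:R * m%:R / (n%:R + 1) :> R.
  by rewrite natr1 -!natrM -e1 natrM mulfK // pnatr_eq0.
have r2 : c2%:R = C%:R * (m%:R * (m%:R - 1)) / ((n%:R + 1) * n%:R) :> R.
  have -> : m%:R - 1 = (m.-1)%:R :> R by rewrite -[m in LHS](prednK m1) -natr1 addrK.
  by rewrite natr1 -!natrM -e2 natrM mulfK // natrM mulf_neq0 // pnatr_eq0.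
rewrite r1 r2 minnC -natr1 addrK.
field.
by rewrite n0 C0 minnC mk0 natr1 pnatr_eq0.
Qed.
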